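(* Let $T_1=(Q_1,\Sigma,\Delta,R_1,q_1^0)$ and $T_2=(Q_2,\Delta,\Omega,R_2,q_2^0)$ be top-down tree transducers, let $\hat{T}_1$ be the product construction of $T_1$ and the domain automaton of $T_2$, and let $M$ be the look-ahead transducer constructed from $T_1$ and $T_2$ as described in the context. Then the composition $\hat{T}_1\circ T_2$ (i.e., the relation $\mathcal{R}(\hat{T}_1)\circ\mathcal{R}(T_2)$) is functional if and only if $M$ is functional.
   Context: A top-down tree transducer $T=(Q,\Sigma,\Delta,R,q_0)$ has finite state set $Q$, ranked input/output alphabets $\Sigma,\Delta$, initial state $q_0$, and finite rule set $R$ of rules $q(a(x_1,\dots,x_k))\to t$ with $a\in\Sigma_k$ ($\Sigma_k$ = symbols of rank $k$) and $t$ a tree over $\Delta$ whose leaves may additionally be of the form $q'(x_i)$, $q'\in Q$, $i\in[k]$; rules are used as rewrite rules in the usual way. $\mathcal{R}(T)$ is the set of pairs $(s,t)$ with $t$ a tree over $\Delta$ derivable from $q_0(s)$; $\text{dom}(q)$ is the set of inputs $s$ such that some tree over $\Delta$ is derivable from $q(s)$. A relation is functional if it is a (partial) function; $\mathcal{R}_1\circ\mathcal{R}_2=\{(s,u)\mid\exists t:(s,t)\in\mathcal{R}_1,(t,u)\in\mathcal{R}_2\}$. For $q\in Q$, $a\in\Sigma_k$, $\text{rhs}_T(q,a)$ is the set of right-hand sides of rules with left-hand side $q(a(x_1,\dots,x_k))$; for a right-hand side $\xi$ (resp. a set $\Gamma$ of right-hand sides), $\xi[x_i]$ (resp. $\Gamma[x_i]$)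 is the set of states $q'$ such that $q'(x_i)$ occurs in $\xi$ (resp. in some tree of $\Gamma$). Domain automaton of $T$: the top-down tree automaton (transducer over $\Sigma$ with rules of the form $p(a(x_1,\dots,x_k))\to a(p_1(x_1),\dots,p_k(x_k))$) with states all subsets of $Q$, initial state $\{q_0\}$, rules $S(a(x_1,\dots,x_k))\to a(S_1(x_1),\dots,S_k(x_k))$ for every $a\in\Sigma_k$, nonempty $S=\{q_1,\dots,q_n\}\subseteq Q$ and nonempty $\Gamma_j\subseteq\text{rhs}_T(q_j,a)$ ($j\in[n]$), where $S_i=\bigcup_j\Gamma_j[x_i]$, and rules $\emptyset(a(x_1,\dots,x_k))\to a(\emptyset(x_1),\dots,\emptyset(x_k))$ for all $a$; for an automaton state $l$, $\text{dom}(l)$ is the set of trees accepted from $l$. Product construction of transducers $T=(Q,\Sigma,\Delta,R,q_0)$ and $T'=(Q',\Delta,\Omega,R',q'_0)$: the transducer with states $Q\times Q'$, initial state $(q_0,q'_0)$, and, for every rule $q(a(x_1,\dots,x_k))\to\xi$ of $T$, every $p\in Q'$ and every tree $\zeta$ derivable from $p(\xi)$ using rules of $T'$ in which the leaves of $\xi$ of the form $q''(x_i)$ are treated as unrewritable symbols and a state $p'$ applied to such a leaf stays as $p'(q''(x_i))$, the rule $(q,p)(a(x_1,\dots,x_k))\to\zeta'$ (said to be obtained from the rule $q(a(x_1,\dots,x_k))\to\xi$ by translating $\xi$ with $p$), where $\zeta'$ replaces each $p'(q''(x_i))$ by $(q'',p')(x_i)$. A top-down tree transducer with look-ahead is a tuple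 $(Q,\Sigma,\Delta,R,q_0,B)$ where $B$ is a top-down tree automaton over $\Sigma$ with state set $L$ and rules have the form $q(a(x_1\!:\!l_1,\dots,x_k\!:\!l_k))\to t$ with $l_i\in L$; on input $s$, each node $v$ with label $a\in\Sigma_k$ is first relabeled by $\langle a,l_1,\dots,l_k\rangle$ where $l_i\in L$ are such that the $i$-th subtree of $v$ is in $\text{dom}(l_i)$, and the relabeled tree is then processed reading each rule as $q(\langle a,l_1,\dots,l_k\rangle(x_1,\dots,x_k))\to t$; the relation consists of all pairs $(s,r)$ with $r$ obtainable this way. Construction of $M$: let $\hat{T}_1$ be the product construction of $T_1$ and the domain automaton of $T_2$ (states written $(q,S)$ with $q\in Q_1$, $S\subseteq Q_2$), and $N$ the product construction of $\hat{T}_1$ and $T_2$ (states written $(q,S,q')$). The states of $M$ are the $(q,S,q')$ with $q'\in S$; its initial state is $(q_1^0,\{q_2^0\},q_2^0)$; its look-ahead automaton is the domain automaton $\hat{A}$ of $\hat{T}_1$. For every rule $(q,S,q')(a(x_1,\dots,x_k))\to\gamma$ of $N$ involving only such states, obtained from the rule $(q,S)(a(x_1,\dots,x_k))\to\xi$ of $\hat{T}_1$ by translating $\xi$ with $q'$, and for all states $l_1,\dots,l_k$ of $\hat{A}$ with $\xi[x_i]\subseteq l_i$ ($i\in[k]$), $M$ has the rule $(q,S,q')(a(x_1\!:\!l_1,\dots,x_k\!:\!l_k))\to\gamma$. *)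

(* Defs.v *)
From mathcomp Require Import all_boot.
From Stdlib Require List.

Set Implicit Arguments.
Unset Strict Implicit.
Unset Printing Implicit Defensive.

Inductive tree (X : Type) : Type := Node : X -> seq (tree X) -> tree X.
Arguments Node {X}.

Fixpoint tmap (X Y : Type) (f : X -> Y) (t : tree X) : tree Y :=
  match t with Node x ts => Node (f x) (map (tmap f) ts) end.

Fixpoint ranked (X : Type) (rk : X -> nat) (t : tree X) : bool :=
  match t with Node x ts => (size ts == rk x) && all (ranked rk) ts end.

(* Right-hand sides: trees over D whose leaves may be q(x_i).  The leaf
   q(x_(i+1)) is encoded as [Node (inr (q, i)) [::]]  (0-based index i). *)
Notation rhs D Q := (tree (D + (Q * nat))%type).

Fixpoint calls (D Q : Type) (xi : rhs D Q) : seq (Q * nat) :=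
  match xi with
  | Node (inl _) xs => flatten (map (@calls D Q) xs)
  | Node (inr qi) _ => [:: qi]
  end.

(* rule sets as relations: R q a xi  <->  q(a(x_1,..,x_k)) -> xi is a rule *)
Definition ruleset (Q A D : Type) := Q -> A -> rhs D Q -> Prop.

(* Semantics.  Input trees may contain, besides symbols of A, "stuck"  *)
(* symbols v : V (unrewritable leaves; no rule applies to them): a     *)
(* state q applied to such a leaf stays as q(v), encoded as the leaf   *)
(* [Node (inr (q, v)) [::]] of the output.  trans R s q t  means that  *)
(* the (fully rewritten) tree t is derivable from q(s): a rule          *)
(* q(a(x_1..x_k)) -> xi is applied at the root and every occurrence of *)
(* q'(x_i) in xi is replaced (independently) by a tree derivable from  *)
(* q'(s_i).                                                            *)
Inductive inst (Q D W : Type) (P : Q -> nat -> tree (D + W) -> Prop)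
  : rhs D Q -> tree (D + W) -> Prop :=
| inst_out d xs ts :
    List.Forall2 (inst P) xs ts -> inst P (Node (inl d) xs) (Node (inl d) ts)
| inst_call q i t : P q i t -> inst P (Node (inr (q, i)) [::]) t.

Section Semantics.
Variables (Q A D V : Type) (R : ruleset Q A D).

Fixpoint trans (s : tree (A + V)) : Q -> tree (D + (Q * V)) -> Prop :=
  match s with
  | Node (inr v) _ => fun q t => t = Node (inr (q, v)) [::]
  | Node (inl a) ss =>
      let F := map trans ss in
      fun q t => exists2 xi, R q a xi &
        inst (fun q' i t' => exists2 f, List.nth_error F i = Some f & f q' t') xi t
  end.
End Semantics.

Definition plain (A : Type) (s : tree A) : tree (A + void) := tmap inl s.
Definition plain_out (D Q : Type) (t : tree D) : tree (D + (Q * void)) := tmap inl t.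

Definition trel (Q A D : Type) (rkA : A -> nat) (rkD : D -> nat)
    (R : ruleset Q A D) (q0 : Q) (s : tree A) (t : tree D) : Prop :=
  ranked rkA s /\ ranked rkD t /\ trans R (plain s) q0 (plain_out Q t).

Definition tdom (Q A D : Type) (rkA : A -> nat) (rkD : D -> nat)
    (R : ruleset Q A D) (q : Q) (s : tree A) : Prop :=
  ranked rkA s /\ exists t : tree D, ranked rkD t /\ trans R (plain s) q (plain_out Q t).

Record tdtt (Q : finType) (A D : Type) := TDTT {
  tt_rules : seq (Q * A * rhs D Q);
  tt_init : Q }.

Definition rules_of (Q : finType) (A D : Type) (T : tdtt Q A D) : ruleset Q A D :=
  fun q a xi => List.In (q, a, xi) (tt_rules T).

Fixpoint wf_rhs (Q D : Type) (rkD : D -> nat) (k : nat) (xi : rhs D Q) : bool :=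
  match xi with
  | Node (inl d) xs => (size xs == rkD d) && all (wf_rhs rkD k) xs
  | Node (inr (_, i)) xs => (size xs == 0) && (i < k)
  end.

Definition wf_tdtt (Q : finType) (A D : Type) (rkA : A -> nat) (rkD : D -> nat)
    (T : tdtt Q A D) : Prop :=
  forall q a xi, List.In (q, a, xi) (tt_rules T) -> wf_rhs rkD (rkA a) xi.

Definition functional (X Y : Type) (R : X -> Y -> Prop) : Prop :=
  forall x y z, R x y -> R x z -> y = z.

Definition rcomp (X Y Z : Type) (R1 : X -> Y -> Prop) (R2 : Y -> Z -> Prop) : X -> Z -> Prop :=
  fun x z => exists y, R1 x y /\ R2 y z.

(* Automata are transducers A -> A with rules                          *)
(*   p(a(x_1..x_k)) -> a(p_1(x_1),..,p_k(x_k)).                        *)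
Definition dom_aut_rule (Q : finType) (A D : Type) (rkA : A -> nat)
    (R : ruleset Q A D) : ruleset {set Q} A A :=
  fun S a xi => exists Sf : nat -> {set Q},
    xi = Node (inl a) (mkseq (fun i => Node (inr (Sf i, i)) [::]) (rkA a)) /\
    ( (S = set0 /\ forall i, i < rkA a -> Sf i = set0) \/
      (S != set0 /\
       exists G : Q -> rhs D Q -> Prop,
         (forall q, q \in S -> (exists xi', G q xi') /\ (forall xi', G q xi' -> R q a xi')) /\
         (forall i, i < rkA a -> forall q',
             q' \in Sf i <-> exists q, q \in S /\ exists xi', G q xi' /\ List.In (q', i) (calls xi')))).

Definition prod_lab (Q Q' O : Type) (l : O + (Q' * (Q * nat))) : O + ((Q * Q') * nat) :=
  match l with
  | inl o => inl o
  | inr (p', (q'', i)) => inr ((q'', p'), i)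
  end.

Definition translates (Q Q' D O : Type) (R' : ruleset Q' D O) (p : Q')
    (xi : rhs D Q) (z : rhs O (Q * Q')) : Prop :=
  exists2 zeta, trans R' xi p zeta & z = tmap (@prod_lab Q Q' O) zeta.

Definition prod_rule (Q Q' A D O : Type) (R : ruleset Q A D) (R' : ruleset Q' D O)
  : ruleset (Q * Q') A O :=
  fun qp a z => exists2 xi, R qp.1 a xi & translates R' qp.2 xi z.

(* R : rules over the relabeled alphabet A * seq L  (<a,l_1..l_k>),    *)
(* B : rules of the look-ahead automaton (states L).                   *)
Inductive relab (A L : Type) (Dm : L -> tree A -> Prop) : tree A -> tree (A * seq L) -> Prop :=
| relab_node a ss ls ss' :
    List.Forall2 Dm ls ss -> List.Forall2 (relab Dm) ss ss' ->
    relab Dm (Node a ss) (Node (a, ls) ss').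

Definition la_rel (Q L A D : Type) (rkA : A -> nat) (rkD : D -> nat)
    (R : ruleset Q (A * seq L) D) (q0 : Q) (B : ruleset L A A)
    (s : tree A) (r : tree D) : Prop :=
  ranked rkA s /\ ranked rkD r /\
  exists s', relab (tdom rkA rkA B) s s' /\ trans R (plain s') q0 (plain_out Q r).

Section Construction.
Variables (Q1 Q2 : finType) (Sig Del Om : Type)
  (rkS : Sig -> nat) (rkD : Del -> nat) (rkO : Om -> nat)
  (T1 : tdtt Q1 Sig Del) (T2 : tdtt Q2 Del Om).

Definition hatT1_rules : ruleset (Q1 * {set Q2}) Sig Del :=
  prod_rule (rules_of T1) (dom_aut_rule rkD (rules_of T2)).
Definition hatT1_init : Q1 * {set Q2} := (tt_init T1, [set tt_init T2]).
Definition hatT1_rel := trel rkS rkD hatT1_rules hatT1_init.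

Definition Mstate := {x : Q1 * {set Q2} * Q2 | x.2 \in x.1.2}.
Definition Mlab (l : Om + (Mstate * nat)) : Om + ((Q1 * {set Q2} * Q2) * nat) :=
  match l with inl o => inl o | inr (p, i) => inr (val p, i) end.

Definition Mla := dom_aut_rule rkS hatT1_rules.

Definition M_rules : ruleset Mstate (Sig * seq {set (Q1 * {set Q2})}) Om :=
  fun st al g =>
    exists2 xi, hatT1_rules (val st).1 al.1 xi &
      translates (rules_of T2) (val st).2 xi (tmap Mlab g) /\
      size al.2 = rkS al.1 /\
      (forall i, i < rkS al.1 -> forall q'', List.In (q'', i) (calls xi) ->
          q'' \in nth set0 al.2 i).

Definition M_init : Mstate :=
  exist _ (tt_init T1, [set tt_init T2], tt_init T2) (set11 (tt_init T2)).

Definition M_rel := la_rel rkS rkO M_rules M_init Mla.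
End Construction.

(* Main.v *)
Require Import Defs.
From mathcomp Require Import all_boot.
From Stdlib Require Import ClassicalEpsilon.

Fixpoint tree_ind' (X : Type) (P : tree X -> Prop)
  (H : forall x ts, (forall t, List.In t ts -> P t) -> P (Node x ts)) (t : tree X) {struct t} : P t :=
  match t with
  | Node x ts => H x ts
      ((fix go (l : seq (tree X)) : forall t, List.In t l -> P t :=
          match l return forall t, List.In t l -> P t with
          | [::] => fun t (h : List.In t [::]) => False_ind _ h
          | t' :: l' => fun t h =>
              match h with
              | or_introl e => eq_ind t' P (tree_ind' X P H t') t e
              | or_intror h' => go l' t h'
              end
          end) ts)
  end.

Definition asb (P : Prop) : bool := if excluded_middle_informative P then true else false.
Lemma asbP (P : Prop) : asb P <-> P.
Proof. rewrite /asb; case: excluded_middle_informative => h; split => //. Qed.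

Definition pick {T} (P : T -> Prop) : option T :=
  match excluded_middle_informative (exists x, P x) with
  | left h => Some (proj1_sig (constructive_indefinite_description _ h))
  | right _ => None end.
Lemma pickP {T} (P : T -> Prop) : (exists x, P x) -> exists x, pick P = Some x /\ P x.
Proof.
rewrite /pick; case: excluded_middle_informative => // h _.
set c := constructive_indefinite_description _ h.
by exists (proj1_sig c); split => //; exact: proj2_sig c.
Qed.
Lemma pick_some {T} (P : T -> Prop) x : pick P = Some x -> P x.
Proof.
rewrite /pick; case: excluded_middle_informative => // h [<-].
exact: proj2_sig (constructive_indefinite_description _ h).
Qed.

Lemma nth_error_lt {X} {l : seq X} {j x} : List.nth_error l j = Some x -> j < size l.
Proof. by elim: l j => [|y l IH] [|j] //= /IH. Qed.
Lemma nth_error_ex {X} {l : seq X} {j} : j < size l -> exists x, List.nth_error l j = Some x.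
Proof. elim: l j => [|y l IH] [|j] //=; [by exists y | exact: IH]. Qed.
Lemma nth_error_nth {X} {l : seq X} {j x} d : List.nth_error l j = Some x -> nth d l j = x.
Proof. elim: l j => [|y l IH] [|j] //= ; [by case | exact: IH]. Qed.
Lemma nth_error_map' {X Y} (f : X -> Y) l j :
  List.nth_error (map f l) j = omap f (List.nth_error l j).
Proof. by elim: l j => [|y l IH] [|j] //=. Qed.
Lemma nth_error_iota m n j :
  List.nth_error (iota m n) j = if j < n then Some (m + j) else None.
Proof.
elim: n m j => [|n IH] m [|j] //=; first by rewrite addn0.
by rewrite IH addSnnS.
Qed.
Lemma nth_error_mkseq {X} (f : nat -> X) n j :
  List.nth_error (mkseq f n) j = if j < n then Some (f j) else None.
Proof. by rewrite /mkseq nth_error_map' nth_error_iota; case: ifP. Qed.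

Lemma In_cat {X} (x : X) s1 s2 : List.In x (s1 ++ s2) <-> List.In x s1 \/ List.In x s2.
Proof. elim: s1 => /= [|y s IH]; [tauto | rewrite IH; tauto]. Qed.
Lemma In_flat {X Y} (f : X -> seq Y) y xs :
  List.In y (flatten (map f xs)) <-> exists2 x, List.In x xs & List.In y (f x).
Proof.
elim: xs => /= [|x xs IH]; first by split => // -[].
rewrite In_cat IH; split.
- by case=> [h|[x' h1 h2]]; [exists x; [left|] | exists x'; [right|]].
- by case=> x' [<-|h1] h2; [left | right; exists x'].
Qed.
Lemma In_map {X Y} (f : X -> Y) y xs :
  List.In y (map f xs) <-> exists2 x, List.In x xs & y = f x.
Proof.
elim: xs => /= [|x xs IH]; first by split => // -[].
rewrite IH; split.
- by case=> [<-|[x' h1 h2]]; [exists x; [left|] | exists x'; [right|]].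
- by case=> x' [<-|h1] ->; [left | right; exists x'].
Qed.
Lemma allIn {X} {p : pred X} {s x} : all p s -> List.In x s -> p x.
Proof. elim: s => //= y s IH /andP[py ps] [<-|h] //; exact: IH. Qed.
Lemma allIn' {X} (p : pred X) s : (forall x, List.In x s -> p x) -> all p s.
Proof.
elim: s => //= y s IH H; apply/andP; split; first by apply: H; left.
by apply: IH => x h; apply: H; right.
Qed.

Lemma map_extIn {X Y} (f g : X -> Y) (l : seq X) :
  (forall x, List.In x l -> f x = g x) -> map f l = map g l.
Proof.
elim: l => //= x l IH H; rewrite (H x (or_introl erefl)) IH //.
by move=> y hy; apply: H; right.
Qed.

Lemma F2_iff {X Y} (R : X -> Y -> Prop) xs ys :
  List.Forall2 R xs ys <-> size xs = size ys /\
    forall j x y, List.nth_error xs j = Some x -> List.nth_error ys j = Some y -> R x y.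
Proof.
split.
- elim=> [|x y xs' ys' Hxy _ [IHs IH]] /=; first by split=> // -[].
  split; first by rewrite IHs.
  by move=> [|j] x' y' /= ; [move=> [<-] [<-] | exact: IH].
- elim: xs ys => [|x xs IH] [|y ys] /= [Hs Hn]; try discriminate; first by constructor.
  constructor; first exact: (Hn 0).
  apply: IH; split; [by case: Hs | move=> j; exact: (Hn j.+1)].
Qed.
Lemma F2_size {X Y} {R : X -> Y -> Prop} {xs ys} : List.Forall2 R xs ys -> size xs = size ys.
Proof. by move/F2_iff => []. Qed.
Lemma F2_nth {X Y} {R : X -> Y -> Prop} {xs ys j x y} : List.Forall2 R xs ys ->
  List.nth_error xs j = Some x -> List.nth_error ys j = Some y -> R x y.
Proof. by move/F2_iff => [_ H]; apply: H. Qed.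
Lemma F2_nthl {X Y} {R : X -> Y -> Prop} {xs ys j x} : List.Forall2 R xs ys ->
  List.nth_error xs j = Some x -> exists2 y, List.nth_error ys j = Some y & R x y.
Proof.
move=> F hx; have := nth_error_lt hx; rewrite (F2_size F) => /nth_error_ex [y hy].
by exists y => //; exact: F2_nth F hx hy.
Qed.
Lemma F2_nthr {X Y} {R : X -> Y -> Prop} {xs ys j y} : List.Forall2 R xs ys ->
  List.nth_error ys j = Some y -> exists2 x, List.nth_error xs j = Some x & R x y.
Proof.
move=> F hy; have := nth_error_lt hy; rewrite -(F2_size F) => /nth_error_ex [x hx].
by exists x => //; exact: F2_nth F hx hy.
Qed.
Lemma F2_map_r {X Y Z} (R : X -> Z -> Prop) (f : Y -> Z) xs ys :
  List.Forall2 R xs (map f ys) <-> List.Forall2 (fun x y => R x (f y)) xs ys.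
Proof.
split.
- elim: ys xs => [|y ys IH] xs H; inversion H; subst; constructor; auto.
- elim=> //= *; constructor; auto.
Qed.
Lemma F2_map_l {X Y Z} (R : Z -> Y -> Prop) (f : X -> Z) xs ys :
  List.Forall2 R (map f xs) ys <-> List.Forall2 (fun x y => R (f x) y) xs ys.
Proof.
split.
- elim: xs ys => [|x xs IH] ys H; inversion H; subst; constructor; auto.
- elim=> //= *; constructor; auto.
Qed.
Lemma F2_implIn {X Y} (R R' : X -> Y -> Prop) xs ys :
  (forall x y, List.In x xs -> R x y -> R' x y) -> List.Forall2 R xs ys -> List.Forall2 R' xs ys.
Proof.
move=> H F; elim: F H => [|x y xs' ys' Hr _ IH] H; constructor.
- by apply: H => //; left.
- by apply: IH => x' y' h; apply: H; right.
Qed.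
Lemma F2_choice {X Y Z} {R1 : X -> Y -> Prop} {R2 : Y -> Z -> Prop} {xs zs} :
  List.Forall2 (fun x z => exists2 y, R1 x y & R2 y z) xs zs ->
  exists ys, List.Forall2 R1 xs ys /\ List.Forall2 R2 ys zs.
Proof.
elim=> [|x z xs' zs' [y h1 h2] _ [ys [H1 H2]]]; first by exists [::]; split; constructor.
by exists (y :: ys); split; constructor.
Qed.
Lemma F2_exists {X Y} (R : X -> Y -> Prop) xs :
  (forall x, List.In x xs -> exists y, R x y) -> exists ys, List.Forall2 R xs ys.
Proof.
elim: xs => [|x xs IH] H; first by exists [::]; constructor.
have [y hy] := H x (or_introl erefl).
have [ys hys] := IH (fun x' h => H x' (or_intror h)).
by exists (y :: ys); constructor.
Qed.
Lemma F2_iota {Y} (R : nat -> Y -> Prop) n ys :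
  List.Forall2 R (iota 0 n) ys <-> size ys = n /\
     forall j y, List.nth_error ys j = Some y -> R j y.
Proof.
rewrite F2_iff size_iota; split => -[Hs H]; split => //.
- move=> j y hy; have hj : j < n by rewrite Hs; exact: nth_error_lt hy.
  by apply: (H j) hy; rewrite nth_error_iota hj.
- by move=> j x y; rewrite nth_error_iota; case: ifP => // _ [<-]; exact: H.
Qed.
Lemma buildn {Y} (R : nat -> Y -> Prop) n :
  (forall j, j < n -> exists y, R j y) ->
  exists ys, size ys = n /\ forall j y, List.nth_error ys j = Some y -> R j y.
Proof.
elim: n R => [|n IH] R H; first by exists [::]; split=> // -[].
have [y0 Hy0] := H 0 isT.
have [ys [Hs Hys]] := IH (fun j => R j.+1) (fun j hj => H j.+1 hj).
exists (y0 :: ys); split; first by rewrite /= Hs.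
by move=> [|j] y /=; [case=> <- | exact: Hys].
Qed.

Lemma tmap_comp {X Y Z} (f : X -> Y) (g : Y -> Z) t : tmap g (tmap f t) = tmap (g \o f) t.
Proof.
elim/tree_ind': t => x ts IH /=; congr Node.
rewrite -map_comp; apply: map_extIn => t h; exact: IH.
Qed.
Lemma tmap_ext {X Y} (f g : X -> Y) t : (forall x, f x = g x) -> tmap f t = tmap g t.
Proof. move=> H; elim/tree_ind': t => x ts IH /=; rewrite H; congr Node; exact: map_extIn. Qed.
Lemma tmap_id' {X} (f : X -> X) t : (forall x, f x = x) -> tmap f t = t.
Proof.
move=> H; elim/tree_ind': t => x ts IH /=; rewrite H; congr Node.
rewrite -[RHS]map_id; apply: map_extIn => t h; exact: IH.
Qed.

Lemma build {X Y} (R : nat -> X -> Y -> Prop) xs :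
  (forall j x, List.nth_error xs j = Some x -> exists y, R j x y) ->
  exists ys, size ys = size xs /\
    forall j x y, List.nth_error xs j = Some x -> List.nth_error ys j = Some y -> R j x y.
Proof.
move=> H.
have Hb : forall j, j < size xs -> exists y, forall x, List.nth_error xs j = Some x -> R j x y.
  move=> j /nth_error_ex [x hx]; have [y hy] := H _ _ hx.
  by exists y => x'; rewrite hx => -[<-].
have [ys [Hs Hys]] := buildn _ _ Hb.
by exists ys; split => // j x y hx /Hys; apply.
Qed.

Lemma F2_trans {X Y Z} {R1 : X -> Y -> Prop} {R2 : Y -> Z -> Prop} {xs ys zs} :
  List.Forall2 R1 xs ys -> List.Forall2 R2 ys zs ->
  List.Forall2 (fun x z => exists2 y, R1 x y & R2 y z) xs zs.
Proof.
move=> F; elim: F zs => [|x y xs' ys' h1 _ IH] zs F2; inversion F2; subst; constructor.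
- by exists y.
- exact: IH.
Qed.

Definition unlab {D W : Type} (l : D + (W * void)) : D :=
  match l with inl d => d | inr (_, v) => match v with end end.
Definition unpo {D W : Type} (t : tree (D + (W * void))) : tree D := tmap unlab t.
Lemma po_unpo {D W : Type} (t : tree (D + (W * void))) : plain_out W (unpo t) = t.
Proof. rewrite /plain_out /unpo tmap_comp; apply: tmap_id' => -[d|[w []]] //. Qed.
Lemma unpo_po {D W : Type} (t : tree D) : unpo (plain_out W t) = t.
Proof. rewrite /plain_out /unpo tmap_comp; exact: tmap_id'. Qed.

Inductive pinst (Q D : Type) (P : Q -> nat -> tree D -> Prop) : rhs D Q -> tree D -> Prop :=
| pinst_out d xs ts : List.Forall2 (pinst Q D P) xs ts -> pinst Q D P (Node (inl d) xs) (Node d ts)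
| pinst_call q i t : P q i t -> pinst Q D P (Node (inr (q, i)) [::]) t.
Arguments pinst {Q D}.
Arguments pinst_out {Q D P}.
Arguments pinst_call {Q D P}.

Definition pinst_spec {Q D} (P : Q -> nat -> tree D -> Prop) (xi : rhs D Q) (t : tree D) : Prop :=
  match xi with
  | Node (inl d) xs => exists2 ts, t = Node d ts & List.Forall2 (pinst P) xs ts
  | Node (inr (q, i)) xs => xs = [::] /\ P q i t
  end.
Lemma pinst_inv {Q D} {P : Q -> nat -> tree D -> Prop} {xi t} : pinst P xi t -> pinst_spec P xi t.
Proof. by case=> [d xs ts H | q i t' H] /=; [exists ts | ]. Qed.

Definition inst_spec {Q D W} (P : Q -> nat -> tree (D + W) -> Prop) (xi : rhs D Q)
  (t : tree (D + W)) : Prop :=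
  match xi with
  | Node (inl d) xs => exists2 ts, t = Node (inl d) ts & List.Forall2 (inst P) xs ts
  | Node (inr (q, i)) xs => xs = [::] /\ P q i t
  end.
Lemma inst_inv {Q D W} {P : Q -> nat -> tree (D + W) -> Prop} {xi t} : inst P xi t -> inst_spec P xi t.
Proof. by case=> [d xs ts H | q i t' H] /=; [exists ts | ]. Qed.

Lemma pinst_mono {Q D} (P P' : Q -> nat -> tree D -> Prop) xi t :
  (forall q i t', P q i t' -> P' q i t') -> pinst P xi t -> pinst P' xi t.
Proof.
move=> H; elim/tree_ind': xi t => x xs IH t; case: x => [d|[q i]] /pinst_inv.
- move=> [ts -> F]; constructor; move: F; apply: F2_implIn => x y hx; exact: IH.
- by move=> [-> h]; constructor; apply: H.
Qed.

Lemma inst_mono {Q D W} (P P' : Q -> nat -> tree (D + W) -> Prop) xi t :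
  (forall q i t', P q i t' -> P' q i t') -> inst P xi t -> inst P' xi t.
Proof.
move=> H; elim/tree_ind': xi t => x xs IH t; case: x => [d|[q i]] /inst_inv.
- move=> [ts -> F]; constructor; move: F; apply: F2_implIn => x y hx; exact: IH.
- by move=> [-> h]; constructor; apply: H.
Qed.

Lemma inst_pinst {Q D W} (P : Q -> nat -> tree (D + (W * void)) -> Prop) xi t0 :
  inst P xi (plain_out W t0) <-> pinst (fun q i t => P q i (plain_out W t)) xi t0.
Proof.
elim/tree_ind': xi t0 => x xs IH t0; case: x => [d|[q i]]; split.
- move/inst_inv => [ts E H]; case: t0 E => d' ts0 /= [Ed Ets]; subst d' ts.
  constructor; move/F2_map_r: H; apply: F2_implIn => x y hx h; exact/(IH x hx y).
- move/pinst_inv => [ts -> H]; rewrite /plain_out /=; constructor; apply/F2_map_r.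
  move: H; apply: F2_implIn => x y hx h; exact/(IH x hx y).
- by move/inst_inv => [-> h]; constructor.
- by move/pinst_inv => [-> h]; constructor.
Qed.

Definition ptrans {Q A D : Type} (R : ruleset Q A D) (s : tree A) (q : Q) (t : tree D) : Prop :=
  trans R (plain s) q (plain_out Q t).

Lemma ptrans_node {Q A D} (R : ruleset Q A D) a ss q t :
  ptrans R (Node a ss) q t <-> exists2 xi, R q a xi &
    pinst (fun q' i t' => exists2 si, List.nth_error ss i = Some si & ptrans R si q' t') xi t.
Proof.
rewrite /ptrans /plain /=; split => -[xi h1 h2]; exists xi => //.
- move/inst_pinst: h2; apply: pinst_mono => q' i t' [f]; rewrite !nth_error_map'.
  by case: (List.nth_error ss i) => //= si [<-] h; exists si.
- apply/inst_pinst; move: h2; apply: pinst_mono => q' i t' [si hsi h].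
  by exists (trans R (tmap inl si)) => //; rewrite !nth_error_map' hsi.
Qed.

Lemma pinst_monoc {Q D} (P P' : Q -> nat -> tree D -> Prop) xi t :
  (forall q i t', List.In (q, i) (calls xi) -> P q i t' -> P' q i t') -> pinst P xi t -> pinst P' xi t.
Proof.
elim/tree_ind': xi t => x xs IH t; case: x => [d|[q i]] H /pinst_inv.
- move=> [ts -> F]; constructor; move: F; apply: F2_implIn => x y hx.
  apply: IH => // q i t' hc; apply: H.
  by rewrite /= In_flat; exists x.
- by move=> [-> h]; constructor; apply: H => //=; left.
Qed.

Lemma pinst_calls {Q D} {P : Q -> nat -> tree D -> Prop} {xi t q i} :
  pinst P xi t -> List.In (q, i) (calls xi) -> exists t', P q i t'.
Proof.
elim/tree_ind': xi t => x xs IH t; case: x => [d|[q' i']] /pinst_inv.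
- move=> [ts _ F] /= /In_flat [x hx hc].
  have [j hj] := List.In_nth_error _ _ hx; have [y _ hy] := F2_nthl F hj.
  exact: IH x hx y hy hc.
- by move=> [-> h] /= [[<- <-]|[]]; exists t.
Qed.

Fixpoint leafy (D W : Type) (t : tree (D + W)) : bool :=
  match t with Node (inl _) ts => all (leafy D W) ts | Node (inr _) ts => nilp ts end.
Arguments leafy {D W}.

Lemma pinst_exists {Q D} (P : Q -> nat -> tree D -> Prop) (xi : rhs D Q) :
  leafy xi -> (forall q i, List.In (q, i) (calls xi) -> exists t, P q i t) ->
  exists t, pinst P xi t.
Proof.
elim/tree_ind': xi => x xs IH; case: x => [d|[q i]] /= hl H.
- have [ts F] : exists ts, List.Forall2 (fun x t => pinst P x t) xs ts.
    apply: F2_exists => x hx; apply: IH => //; first exact: allIn hl hx.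
    by move=> q i hc; apply: H; rewrite In_flat; exists x.
  by exists (Node d ts); constructor.
- case: xs IH H hl => [|y l] _ H hl //.
  by have [t ht] := H q i (or_introl erefl); exists t; constructor.
Qed.

Lemma pinst_conj {Q D} {P P' : Q -> nat -> tree D -> Prop} {xi t} :
  pinst P xi t -> pinst P' xi t -> pinst (fun q i t' => P q i t' /\ P' q i t') xi t.
Proof.
elim/tree_ind': xi t => x xs IH t; case: x => [d|[q i]] /pinst_inv.
- move=> [ts -> F] /pinst_inv [ts' E F']; case: E => E; subst ts'; constructor.
  apply/F2_iff; split; first exact: F2_size F.
  move=> j x y hx hy; apply: IH; [exact: List.nth_error_In hx| exact: F2_nth F hx hy | exact: F2_nth F' hx hy].
- by move=> [-> h] /pinst_inv [_ h']; constructor.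
Qed.

Lemma pinst_ranked {Q D} {rk : D -> nat} {k} {P : Q -> nat -> tree D -> Prop} {xi t} :
  wf_rhs rk k xi -> pinst P xi t -> (forall q i t', P q i t' -> ranked rk t') -> ranked rk t.
Proof.
elim/tree_ind': xi t => x xs IH t; case: x => [d|[q i]] /= hw /pinst_inv.
- move=> [ts -> F] H /=; case/andP: hw => /eqP hs hall.
  rewrite -(F2_size F) hs eqxx /=; apply: allIn' => y hy.
  have [j hj] := List.In_nth_error _ _ hy; have [x hx hxy] := F2_nthr F hj.
  have hxi := List.nth_error_In _ _ hx.
  exact: IH x hxi y (allIn hall hxi) hxy H.
- by move=> [_ h] H; exact: H h.
Qed.

Lemma wf_leafy {D Q} {rk} {k} {xi : rhs D Q} : wf_rhs rk k xi -> leafy xi.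
Proof.
elim/tree_ind': xi => -[d|[q i]] xs IH /=.
- by case/andP=> _ h; apply: allIn' => x hx; apply: IH => //; exact: allIn h hx.
- by case/andP.
Qed.

Lemma wf_calls {D Q} {rk} {k} {xi : rhs D Q} {q i} : wf_rhs rk k xi -> List.In (q, i) (calls xi) -> i < k.
Proof.
elim/tree_ind': xi => -[d|[q' i']] xs IH /=.
- case/andP=> _ h /In_flat [x hx hc]; exact: IH x hx (allIn h hx) hc.
- by case/andP=> _ h [[_ <-]|[]].
Qed.

Lemma decompose {Q D W Y} (f : D + W -> D + (Y * nat)) (hf : forall d, f (inl d) = inl d)
  (P : Q -> nat -> tree (D + W) -> Prop) (Qp : Y -> nat -> tree D -> Prop) xi g u :
  inst P xi g -> pinst Qp (tmap f g) u ->
  pinst (fun q i u' => exists2 g', P q i g' & pinst Qp (tmap f g') u') xi u.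
Proof.
elim/tree_ind': xi g u => x xs IH g u; case: x => [d|[q i]] /inst_inv.
- move=> [gs -> F]; rewrite /= hf => /pinst_inv [us -> F2]; constructor.
  move/F2_map_l: F2 => F2; have := F2_trans F F2; apply: F2_implIn => x y hx [g' h1 h2].
  exact: IH h1 h2.
- by move=> [-> h] hq; constructor; exists g.
Qed.

Lemma compose {Q D W Y} (f : D + W -> D + (Y * nat)) (hf : forall d, f (inl d) = inl d)
  (P : Q -> nat -> tree (D + W) -> Prop) (Qp : Y -> nat -> tree D -> Prop) xi u :
  pinst (fun q i u' => exists2 g', P q i g' & pinst Qp (tmap f g') u') xi u ->
  exists g, inst P xi g /\ pinst Qp (tmap f g) u.
Proof.
elim/tree_ind': xi u => x xs IH u; case: x => [d|[q i]] /pinst_inv.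
- move=> [us -> F].
  have F' : List.Forall2 (fun x u => exists2 g, inst P x g & pinst Qp (tmap f g) u) xs us.
    by move: F; apply: F2_implIn => x y hx /(IH x hx) [g [h1 h2]]; exists g.
  have [gs [F1 F2]] := F2_choice F'.
  exists (Node (inl d) gs); split; first by constructor.
  by rewrite /= hf; constructor; apply/F2_map_l.
- by move=> [-> [g h1 h2]]; exists g; split => //; constructor.
Qed.

Fixpoint lvs (D W : Type) (t : tree (D + W)) : seq W :=
  match t with Node (inl _) ts => flatten (map (lvs D W) ts) | Node (inr w) _ => [:: w] end.
Arguments lvs {D W}.

Lemma calls_lvs {D Q} (xi : rhs D Q) : calls xi = lvs xi.
Proof. elim/tree_ind': xi => -[d|w] xs IH //=; congr flatten; exact: map_extIn. Qed.

Lemma lvs_tmap {D D' W W'} (f : D + W -> D' + W') (fd : D -> D') (fw : W -> W')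
  (hf : forall d, f (inl d) = inl (fd d)) (hw : forall w, f (inr w) = inr (fw w)) t :
  lvs (tmap f t) = map fw (lvs t).
Proof.
elim/tree_ind': t => -[d|w] ts IH /=; rewrite ?hf ?hw //=.
rewrite map_flatten -!map_comp; congr flatten; apply: map_extIn => t h /=; exact: IH.
Qed.

Lemma leafy_tmap {D D' W W'} (f : D + W -> D' + W') (fd : D -> D') (fw : W -> W')
  (hf : forall d, f (inl d) = inl (fd d)) (hw : forall w, f (inr w) = inr (fw w)) t :
  leafy (tmap f t) = leafy t.
Proof.
elim/tree_ind': t => -[d|w] ts IH /=; rewrite ?hf ?hw //=; last by case: ts {IH}.
rewrite all_map; elim: ts IH => //= t ts IHts IH; rewrite IH; last by left.
by rewrite IHts // => t' h; apply: IH; right.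
Qed.

Lemma inst_lvs {Q D W} {P : Q -> nat -> tree (D + W) -> Prop} {xi g w} :
  inst P xi g -> List.In w (lvs g) -> exists q i g', P q i g' /\ List.In w (lvs g').
Proof.
elim/tree_ind': xi g => x xs IH g; case: x => [d|[q i]] /inst_inv.
- move=> [gs -> F] /= /In_flat [g' hg hw].
  have [j hj] := List.In_nth_error _ _ hg; have [x hx hxg] := F2_nthr F hj.
  exact: IH x (List.nth_error_In _ _ hx) g' hxg hw.
- by move=> [_ h] hw; exists q, i, g.
Qed.

Lemma inst_leafy {Q D W} {P : Q -> nat -> tree (D + W) -> Prop} {xi g} :
  inst P xi g -> (forall q i g', P q i g' -> leafy g') -> leafy g.
Proof.
elim/tree_ind': xi g => x xs IH g; case: x => [d|[q i]] /inst_inv.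
- move=> [gs -> F] H /=; apply: allIn' => g' hg.
  have [j hj] := List.In_nth_error _ _ hg; have [x hx hxg] := F2_nthr F hj.
  exact: IH x (List.nth_error_In _ _ hx) g' hxg H.
- by move=> [_ h] H; exact: H h.
Qed.

Lemma trans_leafy {Q A D V} (R : ruleset Q A D) (s : tree (A + V)) q g :
  trans R s q g -> leafy g.
Proof.
elim/tree_ind': s q g => -[a|v] ss IH q g /=.
- move=> [xi _ h]; move/inst_leafy: h; apply => q' i g' [f].
  rewrite nth_error_map'; case E: (List.nth_error ss i) => [si|] //= [<-].
  exact: IH (List.nth_error_In _ _ E) q' g'.
- by move=> ->.
Qed.

Lemma trans_lvs {Q A D V} {R : ruleset Q A D} {s : tree (A + V)} {q g q' v} :
  trans R s q g -> List.In (q', v) (lvs g) -> List.In v (lvs s).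
Proof.
elim/tree_ind': s q g => -[a|v'] ss IH q g /=.
- move=> [xi _ h] /(inst_lvs h) [q1 [i [g' [[f]]]]].
  rewrite nth_error_map'; case E: (List.nth_error ss i) => [si|] //= [<-] ht hw.
  have hsi := List.nth_error_In _ _ E.
  by rewrite In_flat; exists si => //; exact: IH hsi q1 g' ht hw.
- by move=> -> /= [[_ <-]|[]]; left.
Qed.

Lemma inst_mk {A Q W} (P : Q -> nat -> tree (A + W) -> Prop) (Sf : nat -> Q) a n t :
  inst P (Node (inl a) (mkseq (fun i => Node (inr (Sf i, i)) [::]) n)) t <->
  exists2 ts, t = Node (inl a) ts &
    (size ts = n /\ forall j y, List.nth_error ts j = Some y -> P (Sf j) j y).
Proof.
split.
- move/inst_inv => [ts -> F]; exists ts => //.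
  move: F; rewrite /mkseq => /F2_map_l F.
  apply/(F2_iota (fun j y => P (Sf j) j y)); move: F.
  by apply: F2_implIn => x y _ /inst_inv [_ h].
- move=> [ts -> H]; constructor; rewrite /mkseq; apply/F2_map_l.
  have : List.Forall2 (fun j y => P (Sf j) j y) (iota 0 n) ts by apply/F2_iota.
  by apply: F2_implIn => x y _ h; constructor.
Qed.

Lemma pinst_mk {A Q} (P : Q -> nat -> tree A -> Prop) (Sf : nat -> Q) a n t :
  pinst P (Node (inl a) (mkseq (fun i => Node (inr (Sf i, i)) [::]) n)) t <->
  exists2 ts, t = Node a ts &
    (size ts = n /\ forall j y, List.nth_error ts j = Some y -> P (Sf j) j y).
Proof.
split.
- move/pinst_inv => [ts -> F]; exists ts => //.
  move: F; rewrite /mkseq => /F2_map_l F.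
  apply/(F2_iota (fun j y => P (Sf j) j y)); move: F.
  by apply: F2_implIn => x y _ /pinst_inv [_ h].
- move=> [ts -> H]; constructor; rewrite /mkseq; apply/F2_map_l.
  have : List.Forall2 (fun j y => P (Sf j) j y) (iota 0 n) ts by apply/F2_iota.
  by apply: F2_implIn => x y _ h; constructor.
Qed.

Lemma In_iota_lt i n : List.In i (iota 0 n) -> i < n.
Proof.
move=> h; have [j hj] := List.In_nth_error _ _ h; move: hj.
by rewrite nth_error_iota; case: ifP => // hj [<-].
Qed.

Lemma wf_mk {A Q} (rk : A -> nat) (Sf : nat -> Q) a :
  wf_rhs rk (rk a) (Node (inl a) (mkseq (fun i => Node (inr (Sf i, i)) [::]) (rk a))).
Proof.
rewrite /= size_mkseq eqxx /=; apply: allIn' => y /In_map [i hi ->] /=.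
exact: In_iota_lt hi.
Qed.

Lemma da_wf {Q : finType} {A D} {rk : A -> nat} {R : ruleset Q A D} {S a xi} :
  dom_aut_rule rk R S a xi -> wf_rhs rk (rk a) xi.
Proof. by move=> [Sf [-> _]]; exact: wf_mk. Qed.

Lemma ptrans_ranked {Q A D} (rkA : A -> nat) (rkD : D -> nat) (R : ruleset Q A D) :
  (forall q a xi, R q a xi -> wf_rhs rkD (rkA a) xi) ->
  forall s q t, ptrans R s q t -> ranked rkD t.
Proof.
move=> Hw s; elim/tree_ind': s => a ss IH q t /ptrans_node [xi hR hp].
apply: (pinst_ranked (Hw _ _ _ hR) hp) => q' i t' [si hsi ht].
exact: IH (List.nth_error_In _ _ hsi) _ _ ht.
Qed.

Definition lpred {Q A D} (R : ruleset Q A D) (ss : seq (tree A)) :=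
  fun q' i t' => exists2 si, List.nth_error ss i = Some si & ptrans R si q' t'.

Lemma ptrans_node' {Q A D} (R : ruleset Q A D) a ss q t :
  ptrans R (Node a ss) q t <-> exists2 xi, R q a xi & pinst (lpred R ss) xi t.
Proof. exact: ptrans_node. Qed.

Lemma mk_children {Q A D} (R : ruleset Q A D) (Sf : nat -> Q) a ss n :
  size ss = n -> (forall j sj, List.nth_error ss j = Some sj -> exists y, ptrans R sj (Sf j) y) ->
  exists t, pinst (lpred R ss) (Node (inl a) (mkseq (fun i => Node (inr (Sf i, i)) [::]) n)) t.
Proof.
move=> hs H.
have Hb : forall j, j < n -> exists y, exists2 sj, List.nth_error ss j = Some sj & ptrans R sj (Sf j) y.
  move=> j hj; have [sj hsj] : exists sj, List.nth_error ss j = Some sj.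
    by apply: nth_error_ex; rewrite hs.
  by have [y hy] := H j sj hsj; exists y, sj.
have [ys [hy Hy]] := buildn _ _ Hb.
by exists (Node a ys); apply/pinst_mk; exists ys.
Qed.

Lemma da_sound {Q : finType} {A D} (rk : A -> nat) (rkD : D -> nat) (R : ruleset Q A D) :
  (forall q a xi, R q a xi -> wf_rhs rkD (rk a) xi) ->
  forall s S t, ptrans (dom_aut_rule rk R) s S t -> forall q, q \in S -> exists u, ptrans R s q u.
Proof.
move=> Hw s; elim/tree_ind': s => a ss IH S t /ptrans_node [xi [Sf [-> Hc]] hp] q hq.
move/pinst_mk: hp => [ts _ [hs Hts]].
case: Hc => [[S0 _]|[_ [G [HG HS]]]]; first by rewrite S0 inE in hq.
have [[xi' hG] HGR] := HG q hq.
have hR := HGR _ hG.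
have [u hu] : exists u, pinst (lpred R ss) xi' u.
  apply: pinst_exists; first exact: wf_leafy (Hw _ _ _ hR).
  move=> q' i hc; have hi := wf_calls (Hw _ _ _ hR) hc.
  have hq' : q' \in Sf i by apply/(HS i hi); exists q; split => //; exists xi'.
  have [ti hti] : exists ti, List.nth_error ts i = Some ti by apply: nth_error_ex; rewrite hs.
  have [si hsi hd] := Hts i ti hti.
  have [u hu] := IH si (List.nth_error_In _ _ hsi) _ _ hd q' hq'.
  by exists u, si.
by exists u; apply/ptrans_node; exists xi'.
Qed.

Lemma da_complete {Q : finType} {A D} (rk : A -> nat) (R : ruleset Q A D) :
  forall s, ranked rk s -> forall S : {set Q}, (forall q, q \in S -> exists u, ptrans R s q u) ->
  exists t, ptrans (dom_aut_rule rk R) s S t.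
Proof.
move=> s; elim/tree_ind': s => a ss IH /= /andP[/eqP hsz hall] S HS.
have hr : forall j sj, List.nth_error ss j = Some sj -> List.In sj ss /\ ranked rk sj.
  by move=> j sj hj; have h := List.nth_error_In _ _ hj; split => //; exact: allIn hall h.
case: (boolP (S == set0)) => [/eqP S0|nS0].
- have Hc : forall j sj, List.nth_error ss j = Some sj ->
      exists y, ptrans (dom_aut_rule rk R) sj ((fun _ => set0) j) y.
    move=> j sj hj; have [hin hrk] := hr j sj hj.
    by apply: IH hin hrk _ _ => q; rewrite inE.
  have [t ht] := @mk_children _ _ _ (dom_aut_rule rk R) (fun _ => set0) a ss (rk a) hsz Hc.
  exists t; apply/ptrans_node; eexists; last exact: ht.
  by exists (fun _ => set0); split => //; left.
- pose Gv q xi := R q a xi /\ exists u, pinst (lpred R ss) xi u.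
  pose Sf i := [set q' | asb (exists q, q \in S /\ exists xi, Gv q xi /\ List.In (q', i) (calls xi))].
  have Hc : forall j sj, List.nth_error ss j = Some sj ->
      exists y, ptrans (dom_aut_rule rk R) sj (Sf j) y.
    move=> j sj hj; have [hin hrk] := hr j sj hj.
    apply: IH hin hrk _ _ => q'; rewrite inE asbP => -[q [hq [xi [[_ [u hu]] hc]]]].
    have [t' [si hsi ht']] := pinst_calls hu hc.
    by exists t'; move: hsi; rewrite hj => -[->].
  have [t ht] := @mk_children _ _ _ (dom_aut_rule rk R) Sf a ss (rk a) hsz Hc.
  exists t; apply/ptrans_node; eexists; last exact: ht.
  exists Sf; split => //; right; split => //; exists Gv; split.
  + move=> q hq; split; last by move=> xi [].
    have [u /ptrans_node [xi h1 h2]] := HS q hq.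
    by exists xi; split => //; exists u.
  + by move=> i hi q'; rewrite inE asbP.
Qed.

Definition liftlab {D Y} (Pr : pred Y) (l : D + ({y | Pr y} * nat)) : D + (Y * nat) :=
  match l with inl d => inl d | inr (m, i) => inr (proj1_sig m, i) end.

Lemma F2_eqmap {Xx Yy} {f : Yy -> Xx} {xs ys} :
  List.Forall2 (fun x y => x = f y) xs ys -> xs = map f ys.
Proof. by elim=> //= x y xs' ys' -> _ ->. Qed.

Lemma F2_diag {Xx} (R : Xx -> Xx -> Prop) xs :
  (forall x, List.In x xs -> R x x) -> List.Forall2 R xs xs.
Proof.
elim: xs => [|x xs IH] H; constructor; first by apply: H; left.
by apply: IH => y h; apply: H; right.
Qed.

Lemma lift {D Y} (Pr : pred Y) (Qp : Y -> nat -> tree D -> Prop) (h : rhs D Y) u :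
  (forall y i u', Qp y i u' -> Pr y) -> pinst Qp h u ->
  exists g : rhs D {y | Pr y}, tmap (liftlab Pr) g = h /\
    pinst (fun m i u' => Qp (proj1_sig m) i u') g u.
Proof.
move=> HP; elim/tree_ind': h u => -[d|[y i]] hs IH u /pinst_inv.
- move=> [us -> F].
  have F' : List.Forall2 (fun h u => exists2 g, h = tmap (liftlab Pr) g &
              pinst (fun m i u' => Qp (proj1_sig m) i u') g u) hs us.
    by move: F; apply: F2_implIn => x y' hx /(IH x hx) [g [<- hg]]; exists g.
  have [gs [F1 F2]] := F2_choice F'.
  exists (Node (inl d) gs); split; first by rewrite /= (F2_eqmap F1).
  by constructor.
- move=> [-> hq]; exists (Node (inr (exist _ y (HP _ _ _ hq), i)) [::]); split => //.
  by constructor.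
Qed.

Lemma pinst_lift {D Y} (Pr : pred Y) (P : {y | Pr y} -> nat -> tree D -> Prop) g u :
  pinst P g u -> pinst (fun y i u' => exists2 m, proj1_sig m = y & P m i u') (tmap (liftlab Pr) g) u.
Proof.
elim/tree_ind': g u => -[d|[m i]] gs IH u /pinst_inv.
- move=> [us -> F] /=; constructor; apply/F2_map_l; move: F; apply: F2_implIn => x y hx; exact: IH.
- by move=> [-> h] /=; constructor; exists m.
Qed.

Lemma recompose {Qs Dd Oo Xx : Type} {R : ruleset Qs Dd Oo} {z : rhs Dd Xx}
  {Pz : Xx -> nat -> tree Dd -> Prop} {t p g u} {Qp : Xx * Qs -> nat -> tree Oo -> Prop} :
  pinst Pz z t -> trans R z p g -> pinst Qp (tmap (@prod_lab Xx Qs Oo) g) u ->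
  (forall x i t' p' u', Pz x i t' -> Qp (x, p') i u' -> ptrans R t' p' u') -> ptrans R t p u.
Proof.
elim/tree_ind': z t p g u => -[d|[x i]] zs IH t p g u /pinst_inv.
- move=> [ts -> Fz] /= [xi hR hi] hq Hc.
  have hd := decompose (@prod_lab Xx Qs Oo) (fun _ => erefl) _ _ _ _ _ hi hq.
  apply/ptrans_node; exists xi => //; move: hd; apply: pinst_mono => q' j u' [g' [f]].
  rewrite nth_error_map'; case E: (List.nth_error zs j) => [zj|] //= [<-] hg hq'.
  have [tj htj hpj] := F2_nthl Fz E.
  by exists tj => //; exact: IH zj (List.nth_error_In _ _ E) tj q' g' u' hpj hg hq' Hc.
- by move=> [-> h] /= -> /= /pinst_inv [_ hq] Hc; exact: Hc h hq.
Qed.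

Section Main.
Variables (Q1 Q2 : finType) (Sig Del Om : Type)
  (rkS : Sig -> nat) (rkD : Del -> nat) (rkO : Om -> nat)
  (T1 : tdtt Q1 Sig Del) (T2 : tdtt Q2 Del Om).
Hypothesis wf1 : wf_tdtt rkS rkD T1.
Hypothesis wf2 : wf_tdtt rkD rkO T2.

Local Notation X := (Q1 * {set Q2})%type.
Local Notation R1 := (rules_of T1).
Local Notation R2 := (rules_of T2).
Local Notation DA := (dom_aut_rule rkD (rules_of T2)).
Local Notation hT := (hatT1_rules rkD T1 T2).
Local Notation MR := (M_rules rkS rkD T1 T2).
Local Notation MS := (Mstate Q1 Q2).
Local Notation plz := (@prod_lab Q1 {set Q2} Del).
Local Notation plg := (@prod_lab X Q2 Om).

Definition dom2 (p : Q2) (t : tree Del) := exists u, ptrans R2 t p u.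

Lemma Zwf {k} {xi : rhs Del Q1} {S zeta} : wf_rhs rkD k xi -> trans DA xi S zeta ->
  wf_rhs rkD k (tmap plz zeta).
Proof.
elim/tree_ind': xi S zeta => -[d|[q i]] xs IH S zeta /=.
- case/andP => /eqP hs hall [xi [Sf [-> _]]] /inst_mk [ts -> [hts Hts]] /=.
  rewrite size_map hts eqxx /=; apply: allIn' => y /In_map [t ht ->].
  have [j hj] := List.In_nth_error _ _ ht; have [f] := Hts j t hj.
  rewrite nth_error_map'; case E: (List.nth_error xs j) => [x|] //= [<-] htr.
  have hx := List.nth_error_In _ _ E; exact: IH x hx (Sf j) t (allIn hall hx) htr.
- by case/andP => hs hi -> /=.
Qed.

Lemma hTwf {x a z} : hT x a z -> wf_rhs rkD (rkS a) z.
Proof. by move=> [xi h1 [zeta h2 ->]]; exact: Zwf (wf1 _ _ _ h1) h2. Qed.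

Lemma HSr {k} {xi : rhs Del Q1} {S zeta} {Pz : X -> nat -> tree Del -> Prop} {t} :
  wf_rhs rkD k xi -> trans DA xi S zeta -> pinst Pz (tmap plz zeta) t ->
  (forall x i t', Pz x i t' -> forall p, p \in x.2 -> dom2 p t') ->
  pinst (fun q i t' => exists S'', Pz (q, S'') i t') xi t /\ forall p, p \in S -> dom2 p t.
Proof.
elim/tree_ind': xi S zeta t => -[d|[q i]] xs IH S zeta t /=.
- case/andP => /eqP hs hall [xi [Sf [-> Hc]]] /inst_mk [zs -> [hzs Hzs]] /= /pinst_inv [ts -> F] HP.
  move/F2_map_l: F => F.
  have hts : size ts = rkD d by rewrite -(F2_size F).
  have Hj : forall j x t', List.nth_error xs j = Some x -> List.nth_error ts j = Some t' ->
      pinst (fun q i t' => exists S'', Pz (q, S'') i t') x t' /\ forall p, p \in Sf j -> dom2 p t'.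
    move=> j x t' hx ht.
    have [z hz hp] := F2_nthr F ht.
    have [f] := Hzs j z hz; rewrite nth_error_map' hx => -[<-] htr.
    have hxin := List.nth_error_In _ _ hx.
    exact: IH x hxin (Sf j) z t' (allIn hall hxin) htr hp HP.
  split.
  + constructor; apply/F2_iff; split; first by rewrite hs hts.
    by move=> j x t' hx ht; case: (Hj j x t' hx ht).
  + move=> p hp; case: Hc => [[S0 _]|[_ [G [HG HS]]]]; first by rewrite S0 inE in hp.
    have [[xi' hG] HGR] := HG p hp; have hR := HGR _ hG.
    have [u hu] : exists u, pinst (lpred R2 ts) xi' u.
      apply: pinst_exists; first exact: wf_leafy (wf2 _ _ _ hR).
      move=> q' i hc; have hi := wf_calls (wf2 _ _ _ hR) hc.
      have hq' : q' \in Sf i by apply/(HS i hi); exists p; split => //; exists xi'.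
      have [x hx] : exists x, List.nth_error xs i = Some x by apply: nth_error_ex; rewrite hs.
      have [t' ht'] : exists t', List.nth_error ts i = Some t' by apply: nth_error_ex; rewrite hts.
      have [_ hd] := Hj i x t' hx ht'.
      by have [u hu] := hd q' hq'; exists u, t'.
    by exists u; apply/ptrans_node; exists xi'.
- case/andP => /eqP/size0nil -> hi -> /= /pinst_inv [_ h] HP; split.
  + by constructor; exists S.
  + by move=> p hp; exact: HP _ _ _ h p hp.
Qed.

Lemma HSound s : forall q S t, ptrans hT s (q, S) t ->
  ptrans R1 s q t /\ forall p, p \in S -> dom2 p t.
Proof.
elim/tree_ind': s => a ss IH q S t /ptrans_node [z [xi h1 [zeta h2 ->]] hp].
have HP : forall x i t', lpred hT ss x i t' -> forall p, p \in x.2 -> dom2 p t'.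
  move=> [q' S'] i t' [si hsi ht]; exact: (IH si (List.nth_error_In _ _ hsi) q' S' t' ht).2.
have [hp1 hd] := HSr (wf1 _ _ _ h1) h2 hp HP.
split => //; apply/ptrans_node; exists xi => //.
move: hp1; apply: pinst_mono => q' i t' [S' [si hsi ht]]; exists si => //.
exact: (IH si (List.nth_error_In _ _ hsi) q' S' t' ht).1.
Qed.

Lemma HSound' {s} {x : X} {t} : ptrans hT s x t -> forall p, p \in x.2 -> dom2 p t.
Proof. by case: x => q S /HSound [_ h]. Qed.

Definition Qd (P1 : Q1 -> nat -> tree Del -> Prop) (y : X * Q2) (i : nat) (u' : tree Om) : Prop :=
  y.2 \in y.1.2 /\ exists t', [/\ P1 y.1.1 i t', (forall p, p \in y.1.2 -> dom2 p t') &
                                 ptrans R2 t' y.2 u'].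

Definition DCprop (P1 : Q1 -> nat -> tree Del -> Prop) (xi : rhs Del Q1) (S : {set Q2})
  (t : tree Del) (zeta : tree (Del + ({set Q2} * (Q1 * nat)))) :=
  [/\ trans DA xi S zeta,
      pinst (fun (x : X) i t' => P1 x.1 i t' /\ forall p, p \in x.2 -> dom2 p t') (tmap plz zeta) t &
      forall p, p \in S -> forall u, ptrans R2 t p u ->
        exists g, trans R2 (tmap plz zeta) p g /\ pinst (Qd P1) (tmap plg g) u].

Lemma DCr {k} {P1 : Q1 -> nat -> tree Del -> Prop} {xi : rhs Del Q1} {t} {S : {set Q2}} :
  wf_rhs rkD k xi -> pinst P1 xi t -> (forall p, p \in S -> dom2 p t) ->
  exists zeta, DCprop P1 xi S t zeta.
Proof.
elim/tree_ind': xi t S => -[d|[q i]] xs IH t S /=.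
- case/andP => /eqP hs hall /pinst_inv [ts -> F1] HS.
  pose Gv q xi := R2 q d xi /\ exists u, pinst (lpred R2 ts) xi u.
  pose Sf j := [set q' | asb (exists q, q \in S /\ exists xi, Gv q xi /\ List.In (q', j) (calls xi))].
  have hts : size ts = rkD d by rewrite -(F2_size F1).
  have Hdom : forall j t', List.nth_error ts j = Some t' -> forall q', q' \in Sf j -> dom2 q' t'.
    move=> j t' ht q'; rewrite inE asbP => -[q0 [_ [xi0 [[_ [u hu]] hc]]]].
    have [u' [t'' ht'' hu']] := pinst_calls hu hc.
    by exists u'; move: ht''; rewrite ht => -[->].
  pose RR j x z := forall t', List.nth_error ts j = Some t' -> DCprop P1 x (Sf j) t' z.
  have Hb : forall j x, List.nth_error xs j = Some x -> exists z, RR j x z.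
    move=> j x hx; have [t' ht' hp] := F2_nthl F1 hx.
    have hxin := List.nth_error_In _ _ hx.
    have [z hz] := IH x hxin t' (Sf j) (allIn hall hxin) hp (Hdom j t' ht').
    by exists z => t'' ht''; move: ht''; rewrite ht' => -[<-].
  have [zs [hzs Hzs]] := build RR xs Hb.
  have Hx : forall j z, List.nth_error zs j = Some z -> exists x, List.nth_error xs j = Some x.
    by move=> j z hz; apply: nth_error_ex; rewrite -hzs; exact: nth_error_lt hz.
  have Ht : forall j z, List.nth_error zs j = Some z -> exists t', List.nth_error ts j = Some t'.
    by move=> j z hz; apply: nth_error_ex; rewrite hts -hs -hzs; exact: nth_error_lt hz.
  exists (Node (inl d) zs); split.
  + exists (Node (inl d) (mkseq (fun i => Node (inr (Sf i, i)) [::]) (rkD d))).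
    * exists Sf; split => //; case: (boolP (S == set0)) => [/eqP S0|nS0].
      - left; split => // i _; apply/setP => q'; rewrite inE in_set0.
        apply/negbTE/negP => /asbP [q0 [hq0 _]]; by rewrite S0 inE in hq0.
      - right; split => //; exists Gv; split.
        + move=> q hq; split; last by move=> xi [].
          have [u /ptrans_node [xi h1 h2]] := HS q hq.
          by exists xi; split => //; exists u.
        + by move=> i hi q'; rewrite inE asbP.
    * apply/inst_mk; exists zs => //; split; first by rewrite hzs hs.
      move=> j z hz; have [x hx] := Hx j z hz; have [t' ht'] := Ht j z hz.
      exists (trans DA x); first by rewrite nth_error_map' hx.
      by case: (Hzs j x z hx hz t' ht').
  + rewrite /=; constructor; apply/F2_map_l/F2_iff; split; first by rewrite hzs (F2_size F1).
    move=> j z t' hz ht'; have [x hx] := Hx j z hz.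
    by case: (Hzs j x z hx hz t' ht').
  + move=> p hp u /ptrans_node [xi' hR hu].
    have hG : Gv p xi' by split => //; exists u.
    have H : pinst (fun q' i u' => exists2 g', (exists2 f, List.nth_error
               (map (trans R2) (map (tmap plz) zs)) i = Some f & f q' g') &
               pinst (Qd P1) (tmap plg g') u') xi' u.
      move: hu; apply: pinst_monoc => q' i u' hc [t' ht' hu'].
      have hq' : q' \in Sf i by rewrite inE asbP; exists p; split => //; exists xi'.
      have hi : i < size zs by rewrite hzs hs -hts; exact: nth_error_lt ht'.
      have [z hz] := nth_error_ex hi; have [x hx] := Hx i z hz.
      have [_ _ Hf] := Hzs i x z hx hz t' ht'.
      have [g [hg1 hg2]] := Hf q' hq' u' hu'.
      by exists g => //; exists (trans R2 (tmap plz z)) => //; rewrite !nth_error_map' hz.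
    have [g [hg1 hg2]] := compose plg (fun _ => erefl) _ _ _ _ H.
    by exists g; split => //; exists xi'.
- case/andP => /eqP/size0nil -> hi /pinst_inv [_ h] HS.
  exists (Node (inr (S, (q, i))) [::]); split => //=.
  + by constructor; split.
  + move=> p hp u hu; exists (Node (inr (p, ((q, S), i))) [::]); split => //=.
    by constructor; split => //; exists t.
Qed.

Lemma HC s : forall q (S : {set Q2}) t, ptrans R1 s q t -> (forall p, p \in S -> dom2 p t) ->
  ptrans hT s (q, S) t.
Proof.
elim/tree_ind': s => a ss IH q S t /ptrans_node [xi h1 hp] HS.
have [zeta [h2 h3 _]] := DCr (wf1 _ _ _ h1) hp HS.
apply/ptrans_node; exists (tmap plz zeta); first by exists xi => //; exists zeta.
move: h3; apply: pinst_mono => -[q' S'] i t' [[si hsi ht] hd]; exists si => //.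
exact: IH si (List.nth_error_In _ _ hsi) q' S' t' ht hd.
Qed.


Definition lab (s : tree Sig) : {set X} := [set x | asb (exists t, ptrans hT s x t)].
Fixpoint star (s : tree Sig) : tree (Sig * seq {set X}) :=
  match s with Node a ss => Node (a, map lab ss) (map star ss) end.

Lemma E s : ranked rkS s -> forall q (S : {set Q2}) p (hp : p \in S) t u,
  ptrans R1 s q t -> (forall p, p \in S -> dom2 p t) -> ptrans R2 t p u ->
  ptrans MR (star s) (exist _ (q, S, p) hp) u.
Proof.
elim/tree_ind': s => a ss IH /= /andP[/eqP hsz hall] q S p hp t u /ptrans_node [xi h1 hp1] HS hu.
have [zeta [h2 h3 Hfit]] := DCr (wf1 _ _ _ h1) hp1 HS.
have [g [hg1 hg2]] := Hfit p hp u hu.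
have HPr : forall (y : X * Q2) i u', Qd (lpred R1 ss) y i u' -> y.2 \in y.1.2 by move=> y i u' [].
have [gm [hgm1 hgm2]] := lift (fun y : X * Q2 => y.2 \in y.1.2) _ _ _ HPr hg2.
apply/ptrans_node; exists gm.
- exists (tmap plz zeta); first by exists xi => //; exists zeta.
  split; first by exists g => //; rewrite -hgm1; apply: tmap_ext => -[o|[m i]].
  split; first by rewrite /= size_map.
  move=> i hi [q'' S''] hc /=.
  have [t' [[si hsi h1'] hd]] := pinst_calls h3 hc.
  rewrite (nth_error_nth (x := lab si)); last by rewrite nth_error_map' hsi.
  by rewrite inE asbP; exists t'; exact: HC h1' hd.
- move: hgm2; apply: pinst_mono => -[[[q'' S''] p'] hm] i u' [_ [t' [[si hsi ht'] hd hu']]] /=.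
  exists (star si); first by rewrite nth_error_map' hsi.
  have hin := List.nth_error_In _ _ hsi.
  exact: IH si hin (allIn hall hin) q'' S'' p' hm t' u' ht' hd hu'.
Qed.

Lemma relab_star s : ranked rkS s -> relab (tdom rkS rkS (Mla rkS rkD T1 T2)) s (star s).
Proof.
elim/tree_ind': s => a ss IH /= /andP[_ hall]; constructor.
- apply/F2_map_l; apply: F2_diag => si hsi; have hr := allIn hall hsi.
  split => //.
  have Hd : forall x, x \in lab si -> exists u, ptrans hT si x u by move=> x; rewrite inE asbP.
  have [t ht] := da_complete rkS hT si hr (lab si) Hd.
  exists t; split => //.
  exact: ptrans_ranked rkS rkS _ (fun q a xi h => da_wf h) si (lab si) t ht.
- apply/F2_map_r; apply: F2_diag => si hsi; exact: IH si hsi (allIn hall hsi).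
Qed.

Local Notation DmM := (tdom rkS rkS (Mla rkS rkD T1 T2)).

Definition Gf (x : X) (p : Q2) (s : tree Sig) := forall t1 t2 u1 u2,
  ptrans hT s x t1 -> ptrans R2 t1 p u1 -> ptrans hT s x t2 -> ptrans R2 t2 p u2 -> u1 = u2.

Lemma relab_inv a ss s' : relab DmM (Node a ss) s' ->
  exists ls ss', [/\ s' = Node (a, ls) ss', List.Forall2 DmM ls ss & List.Forall2 (relab DmM) ss ss'].
Proof. by move=> h; inversion h; subst; exists ls, ss'. Qed.


Lemma K s : forall s' (m : MS) u, relab DmM s s' -> ptrans MR s' m u ->
  Gf (val m).1 (val m).2 s -> exists2 t, ptrans hT s (val m).1 t & ptrans R2 t (val m).2 u.
Proof.
elim/tree_ind': s => a ss IH s' [[[q S] p] hpS] u /relab_inv [ls [ss' [-> Fl Fs]]].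
move=> /ptrans_node [g [z hz [[gam hgam hgz] [hsz hla]]] hpg] HG.
move: hz hla hsz HG => /= hz hla hsz HG.
have hwz := hTwf hz.
have LA : forall (y : X) j, List.In (y, j) (calls z) ->
    exists sj, List.nth_error ss j = Some sj /\ exists t', ptrans hT sj y t'.
  move=> y j hc; have hj := wf_calls hwz hc.
  have [l hl] : exists l, List.nth_error ls j = Some l by apply: nth_error_ex; rewrite hsz.
  have hy : y \in l by rewrite -(nth_error_nth set0 hl); exact: hla j hj y hc.
  have [sj hsj [_ [t [_ ht]]]] := F2_nthl Fl hl.
  have [t' ht'] := da_sound rkS rkD hT (fun _ _ _ h => hTwf h) sj l t ht y hy.
  by exists sj; split => //; exists t'.
have hfm : forall w : MS * nat, @Mlab Q1 Q2 Om (inr w) = inr (val w.1, w.2) by case.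
have Hms : forall (w : X * Q2) i, List.In (w, i) (calls (tmap plg gam)) -> w.2 \in w.1.2.
  move=> w i; rewrite -hgz calls_lvs (lvs_tmap _ id _ (fun _ => erefl) hfm).
  by move=> /In_map [[m j] _ [-> _]]; exact: (valP m).
have hfg : forall w : Q2 * (X * nat), plg (inr w) = inr ((w.2.1, w.1), w.2.2) by move=> [? [? ?]].
have Hsub : forall (w : X * Q2) j, List.In (w, j) (calls (tmap plg gam)) ->
    List.In (w.1, j) (calls z).
  move=> w j; rewrite !calls_lvs (lvs_tmap plg id _ (fun _ => erefl) hfg).
  move=> /In_map [[r' [y' j']] hin [-> ->]] /=; exact: trans_lvs hgam hin.
have Gp : forall (w : X * Q2) j sj, List.In (w, j) (calls (tmap plg gam)) ->
    List.nth_error ss j = Some sj -> Gf w.1 w.2 sj.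
  move=> [y r] j sj hc hsj t1 t2 u1 u2 /= h1 h1' h2 h2'.
  pose s0 (y' : X) j' := pick (fun t' => exists sj', List.nth_error ss j' = Some sj' /\ ptrans hT sj' y' t').
  pose sk (tk : tree Del) (y' : X) j' := if (y' == y) && (j' == j) then Some tk else s0 y' j'.
  have sk_spec : forall tk, ptrans hT sj y tk -> forall y' j' t', sk tk y' j' = Some t' ->
      exists sj', List.nth_error ss j' = Some sj' /\ ptrans hT sj' y' t'.
    move=> tk htk y' j' t'; rewrite /sk; case: ifP => [/andP [/eqP e1 /eqP e2] [e3]|_ h].
      by subst; exists sj.
    exact: (pick_some _ _ h).
  have sk_def : forall tk y' j', List.In (y', j') (calls z) -> exists t', sk tk y' j' = Some t'.
    move=> tk y' j' hc'; rewrite /sk; case: ifP => _; first by exists tk.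
    have [sj' [hsj' [t' ht']]] := LA y' j' hc'.
    have [t'' [e _]] := @pickP _ (fun t' => exists sj', List.nth_error ss j' = Some sj' /\ ptrans hT sj' y' t')
      (ex_intro _ t' (ex_intro _ sj' (conj hsj' ht'))).
    by exists t''.
  have build_k : forall tk uk, ptrans hT sj y tk -> ptrans R2 tk r uk ->
      exists TT UU, [/\ ptrans hT (Node a ss) (q, S) TT, ptrans R2 TT p UU &
        pinst (fun w i u' => (w, i) = ((y, r), j) -> u' = uk) (tmap plg gam) UU].
    move=> tk uk htk huk.
    have [TT hTT] : exists TT, pinst (fun y' j' t' => sk tk y' j' = Some t') z TT.
      apply: pinst_exists; first exact: wf_leafy hwz.
      by move=> y' j' hc'; exact: sk_def tk y' j' hc'.
    pose Qk (w : X * Q2) i u' := ((w, i) = ((y, r), j) -> u' = uk) /\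
                 exists t', sk tk w.1 i = Some t' /\ ptrans R2 t' w.2 u'.
    have [UU hUU] : exists UU, pinst Qk (tmap plg gam) UU.
      apply: pinst_exists.
      - rewrite (leafy_tmap plg id _ (fun _ => erefl) hfg); exact: trans_leafy hgam.
      - move=> w i hc'.
        case: (boolP ((w, i) == ((y, r), j))) => [/eqP e | ne].
        + exists uk; split => //; exists tk; case: e => -> ->; split => //.
          by rewrite /sk /= !eqxx.
        + have [t' ht'] := sk_def tk w.1 i (Hsub w i hc').
          have [sj' [_ hh]] := sk_spec tk htk _ _ _ ht'.
          have [u' hu'] := HSound' hh w.2 (Hms w i hc').
          exists u'; split; first by move=> e; rewrite e eqxx in ne.
          by exists t'.
    exists TT, UU; split.
    + apply/ptrans_node; exists z => //; move: hTT; apply: pinst_mono => y' j' t' /(sk_spec tk htk).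
      by move=> [sj' [h3 h4]]; exists sj'.
    + apply: (recompose hTT hgam hUU) => y' i t' p' u' ht1 [_ [t'' [ht2 hu2]]].
      by move: ht2 => /=; rewrite ht1 => -[->].
    + by move: hUU; apply: pinst_mono => w i u' [].
  have [TT1 [UU1 [hT1 hU1 hq1]]] := build_k t1 u1 h1 h1'.
  have [TT2 [UU2 [hT2 hU2 hq2]]] := build_k t2 u2 h2 h2'.
  have e := HG TT1 TT2 UU1 UU2 hT1 hU1 hT2 hU2.
  rewrite -e in hq2.
  have [w [e1 e2]] := pinst_calls (pinst_conj hq1 hq2) hc.
  by rewrite -(e1 erefl) -(e2 erefl).
have hpg2 := pinst_lift (fun w : X * Q2 => w.2 \in w.1.2) _ _ _ hpg.
have e : tmap (liftlab (fun w : X * Q2 => w.2 \in w.1.2)) g = tmap plg gam.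
  by rewrite -hgz; apply: tmap_ext => -[o|[m i]].
rewrite e in hpg2.
pose Qm (w : X * Q2) i u' := exists sj sj' (m : MS), [/\ proj1_sig m = w, List.nth_error ss i = Some sj,
    List.nth_error ss' i = Some sj' /\ relab DmM sj sj', Gf w.1 w.2 sj & ptrans MR sj' m u'].
have hQm : pinst Qm (tmap plg gam) u.
  move: hpg2; apply: pinst_monoc => w i u' hc [m hm [sj' hsj' hrun]].
  have [sj hsj hrel] := F2_nthr Fs hsj'.
  by exists sj, sj', m; split => //; apply: Gp hc hsj.
have [TT hTT] : exists TT, pinst (lpred hT ss) z TT.
  apply: pinst_exists; first exact: wf_leafy hwz.
  by move=> y j hc; have [sj [hsj [t' ht']]] := LA y j hc; exists t', sj.
exists TT; first by apply/ptrans_node; exists z.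
apply: (recompose hTT hgam hQm) => x i t' p' u' [si hsi ht'].
move=> [sj [sj' [[w' pw] [/= hm hsj [hsj' hrel] hG hrun]]]]; subst w'.
move: hsj; rewrite hsi => -[esj]; subst sj.
have hin := List.nth_error_In _ _ hsi.
have [t'' h1 h2] := IH si hin sj' (exist _ (x, p') pw) u' hrel hrun hG.
have [u'' hu''] := HSound' ht' p' pw.
by rewrite (hG t'' t' u' u'' h1 h2 ht' hu'').
Qed.

Lemma comp_sub_M s u :
  rcomp (hatT1_rel rkS rkD T1 T2) (trel rkD rkO (rules_of T2) (tt_init T2)) s u ->
  M_rel rkS rkD rkO T1 T2 s u.
Proof.
move=> [t [[hs [ht h1]] [_ [hu h2]]]].
have [h1' hd] := HSound s (tt_init T1) [set tt_init T2] t h1.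
split => //; split => //; exists (star s); split; first exact: relab_star hs.
exact: E hs (tt_init T1) [set tt_init T2] (tt_init T2) (set11 (tt_init T2)) t u h1' hd h2.
Qed.

Lemma M_sub_comp (Hf : functional (rcomp (hatT1_rel rkS rkD T1 T2)
                                          (trel rkD rkO (rules_of T2) (tt_init T2)))) s u :
  M_rel rkS rkD rkO T1 T2 s u ->
  rcomp (hatT1_rel rkS rkD T1 T2) (trel rkD rkO (rules_of T2) (tt_init T2)) s u.
Proof.
move=> [hs [hu [s' [hr hm]]]].
have hrk : forall t, ptrans hT s (hatT1_init T1 T2) t -> ranked rkD t.
  by move=> t; exact: ptrans_ranked rkS rkD hT (fun _ _ _ h => hTwf h) s _ t.
have hrk2 : forall t p u, ptrans R2 t p u -> ranked rkO u.
  by move=> t p u'; exact: ptrans_ranked rkD rkO R2 wf2 t p u'.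
have Gt : Gf (hatT1_init T1 T2) (tt_init T2) s.
  move=> t1 t2 u1 u2 h1 h1' h2 h2'; apply: (Hf s).
  - exists t1; split; [split; [done | split; [exact: hrk h1 | done]] |
                       split; [exact: hrk h1 | split; [exact: hrk2 h1' | done]]].
  - exists t2; split; [split; [done | split; [exact: hrk h2 | done]] |
                       split; [exact: hrk h2 | split; [exact: hrk2 h2' | done]]].
have [t ht1 ht2] := K s s' (M_init T1 T2) u hr hm Gt.
exists t; split; [split; [done | split; [exact: hrk ht1 | done]] |
                 split; [exact: hrk ht1 | split; [done | done]]].
Qed.

End Main.

Theorem corollary1 (Q1 Q2 Sig Del Om : finType)
    (rkS : Sig -> nat) (rkD : Del -> nat) (rkO : Om -> nat)
    (T1 : tdtt Q1 Sig Del) (T2 : tdtt Q2 Del Om) :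
  wf_tdtt rkS rkD T1 -> wf_tdtt rkD rkO T2 ->
  (functional (rcomp (hatT1_rel rkS rkD T1 T2) (trel rkD rkO (rules_of T2) (tt_init T2)))
   <-> functional (M_rel rkS rkD rkO T1 T2)).
Proof.
move=> wf1 wf2; split.
- move=> Hf s u1 u2 h1 h2.
  exact: Hf s u1 u2 (M_sub_comp _ _ _ _ _ _ _ _ _ _ wf1 wf2 Hf s u1 h1) (M_sub_comp _ _ _ _ _ _ _ _ _ _ wf1 wf2 Hf s u2 h2).
- move=> Hm s u1 u2 h1 h2.
  exact: Hm s u1 u2 (comp_sub_M _ _ _ _ _ _ _ _ _ _ wf1 wf2 s u1 h1) (comp_sub_M _ _ _ _ _ _ _ _ _ _ wf1 wf2 s u2 h2).
Qed.
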